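(* For all natural numbers $n,m$ there is a natural number $s_{n,m}$, depending only on $n$ and $m$, such that every structure $A$ which is either a pre-Lie ring or a left brace and satisfies $A^{(n)}=0$ and $A^{m}=0$ also satisfies $A^{[s_{n,m}]}=0$. Moreover, one can take $s_{n+1,m}\le s_{n,m}(m+1)$.
   Context: A (left) brace is a set $A$ with binary operations $+,\circ$ such that $(A,+)$ is an abelian group, $(A,\circ)$ is a group, and $a\circ(b+c)+a=a\circ b+a\circ c$; write $a*b=a\circ b-a-b$. A pre-Lie ring is an abelian group $(A,+)$ with a biadditive product $\cdot$ satisfying $(x\cdot y)\cdot z-x\cdot(y\cdot z)=(y\cdot x)\cdot z-y\cdot(x\cdot z)$. Let $\star$ denote $*$ for braces and $\cdot$ for pre-Lie rings; for additive subgroups $X,Y$, $X\star Y$ is the additive subgroup generated by $\{x\star y\}$. Set $A^1=A^{(1)}=A^{[1]}=A$, $A^{i+1}=A\star A^i$, $A^{(i+1)}=A^{(i)}\star A$, $A^{[i+1]}=\sum_{j=1}^{i}A^{[j]}\star A^{[i+1-j]}$. *)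

(* Defs.v *)
From HB Require Import structures.
From mathcomp Require Import all_boot all_order all_algebra.
Set Implicit Arguments. Unset Strict Implicit. Unset Printing Implicit Defensive.
Import GRing.Theory.
Local Open Scope ring_scope.

Definition subset_of (V : Type) := V -> Prop.

Inductive addgen (V : zmodType) (S : V -> Prop) : V -> Prop :=
| addgen_in x : S x -> addgen S x
| addgen_0 : addgen S 0
| addgen_add x y : addgen S x -> addgen S y -> addgen S (x + y)
| addgen_opp x : addgen S x -> addgen S (- x).

Section Series.
Variables (V : zmodType) (star : V -> V -> V).

Definition starset (X Y : V -> Prop) : V -> Prop :=
  addgen (fun z => exists x y, X x /\ Y y /\ z = star x y).

Definition fullset : V -> Prop := fun _ => True.

(* A^1 = A, A^{i+1} = A star A^i   (index 0 is a dummy, set to A) *)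
Fixpoint lpow (i : nat) : V -> Prop :=
  match i with
  | 0%N => fullset
  | S i' => match i' with
            | 0%N => fullset
            | _ => starset fullset (lpow i')
            end
  end.

(* A^(1) = A, A^(i+1) = A^(i) star A   (index 0 is a dummy, set to A) *)
Fixpoint rpow (i : nat) : V -> Prop :=
  match i with
  | 0%N => fullset
  | S i' => match i' with
            | 0%N => fullset
            | _ => starset (rpow i') fullset
            end
  end.

(* brk_upto n k = A^[k] for 1 <= k <= n; computed by course-of-values
   recursion: A^[1] = A and, for k >= 2,
   A^[k] = sum_{j=1}^{k-1} A^[j] star A^[k-j]
   (a sum of additive subgroups = the subgroup generated by their union). *)
Fixpoint brk_upto (n : nat) : nat -> V -> Prop :=
  match n with
  | 0%N => fun _ => fullset
  | S n' => fun k =>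
      if (k <= n')%N then brk_upto n' k
      else if k == 1%N then fullset
      else addgen (fun z => exists j, (1 <= j < k)%N /\
                     starset (brk_upto n' j) (brk_upto n' (k - j)) z)
  end.

Definition bpow (k : nat) : V -> Prop := brk_upto k k.

Definition is_zero_set (X : V -> Prop) : Prop := forall x, X x -> x = 0.

End Series.

Definition is_left_brace (V : zmodType) (circ : V -> V -> V) : Prop :=
  (forall a b c, circ a (circ b c) = circ (circ a b) c) /\
  (exists e : V, (forall a, circ e a = a /\ circ a e = a) /\
                 (forall a, exists b, circ a b = e /\ circ b a = e)) /\
  (forall a b c, circ a (b + c) + a = circ a b + circ a c).

Definition brace_star (V : zmodType) (circ : V -> V -> V) (a b : V) : V :=
  circ a b - a - b.

Definition is_prelie_ring (V : zmodType) (dot : V -> V -> V) : Prop :=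
  (forall x y z, dot (x + y) z = dot x z + dot y z) /\
  (forall x y z, dot x (y + z) = dot x y + dot x z) /\
  (forall x y z, dot (dot x y) z - dot x (dot y z) = dot (dot y x) z - dot y (dot x z)).

Definition nilp_implies (V : zmodType) (star : V -> V -> V) (n m s : nat) : Prop :=
  is_zero_set (rpow star n) -> is_zero_set (lpow star m) -> is_zero_set (bpow star s).

(* Main.v *)
Require Import Defs.
From mathcomp Require Import all_boot all_order all_algebra.
From mathcomp Require Import zify.
Set Implicit Arguments. Unset Strict Implicit. Unset Printing Implicit Defensive.
Import GRing.Theory.
Local Open Scope ring_scope.

Definition subgrp (V : zmodType) (X : V -> Prop) :=
  X 0 /\ (forall x y, X x -> X y -> X (x + y)) /\ (forall x, X x -> X (- x)).

Lemma addgen_sub (V : zmodType) (S T : V -> Prop) :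
  subgrp T -> (forall x, S x -> T x) -> forall x, addgen S x -> T x.
Proof.
move=> [T0 [TD TN]] ST x; elim => //; auto.
Qed.

Lemma addgen_grp (V : zmodType) (S : V -> Prop) : subgrp (addgen S).
Proof. split; [exact: addgen_0|split; [exact: addgen_add|exact: addgen_opp]]. Qed.

Lemma full_grp (V : zmodType) : subgrp (@fullset V).
Proof. by []. Qed.

Section G.
Variables (V : zmodType) (star : V -> V -> V).

Lemma rpow_grp p : subgrp (rpow star p).
Proof. case: p => [|[|p]]; [exact: full_grp|exact: full_grp|exact: addgen_grp]. Qed.
Lemma lpow_grp p : subgrp (lpow star p).
Proof. case: p => [|[|p]]; [exact: full_grp|exact: full_grp|exact: addgen_grp]. Qed.

Lemma rpow_S p : (1 <= p)%N -> rpow star p.+1 = starset star (rpow star p) (@fullset V).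
Proof. by case: p. Qed.
Lemma lpow_S p : (1 <= p)%N -> lpow star p.+1 = starset star (@fullset V) (lpow star p).
Proof. by case: p. Qed.

Lemma starset_mono (X X' Y : V -> Prop) : (forall x, X x -> X' x) ->
  forall z, starset star X Y z -> starset star X' Y z.
Proof.
move=> H; apply: addgen_sub; first exact: addgen_grp.
move=> z [x [y [Hx [Hy ->]]]]; apply: addgen_in; exists x, y; auto.
Qed.

Lemma rpow_mono p x : rpow star p.+1 x -> rpow star p x.
Proof.
elim: p x => [|p IH] x //; case: p IH => [|p] IH //.
rewrite rpow_S // [rpow _ p.+2]rpow_S //; apply: starset_mono; exact: IH.
Qed.

Lemma star_rpow p x y : (1 <= p)%N -> rpow star p x -> rpow star p.+1 (star x y).
Proof. move=> Hp Hx; rewrite rpow_S //; apply: addgen_in; exists x, y; split => //. Qed.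
Lemma star_lpow p x y : (1 <= p)%N -> lpow star p y -> lpow star p.+1 (star x y).
Proof. move=> Hp Hy; rewrite lpow_S //; apply: addgen_in; exists x, y; split => //. Qed.

Lemma brk_eq n k : (k <= n)%N -> brk_upto star n k = brk_upto star k k.
Proof.
elim: n => [|n IH] Hk; first by move: Hk; rewrite leqn0 => /eqP ->.
case: (leqP k n) => H.
  by rewrite /= H IH.
by have -> : k = n.+1 by apply/eqP; rewrite eqn_leq Hk H.
Qed.

Lemma bpow_gen k x : (2 <= k)%N -> bpow star k x ->
  addgen (fun z => exists j, (1 <= j < k)%N /\
     starset star (bpow star j) (bpow star (k - j)) z) x.
Proof.
case: k => [|k] //= Hk.
have Hk1 : (k.+1 <= k)%N = false by rewrite ltnn.
rewrite /bpow /= Hk1.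
have -> : (k.+1 == 1%N) = false by case: k Hk {Hk1}.
apply: addgen_sub; first exact: addgen_grp.
move=> z [j [Hj Hz]]; apply: addgen_in; exists j; split => //.
move/andP: Hj => [Hj1 Hj2].
rewrite -(@brk_eq k j); last by lia.
rewrite -(@brk_eq k (k.+1 - j)); last by lia.
exact: Hz.
Qed.

Definition sumset (X Y : V -> Prop) : V -> Prop :=
  fun z => exists x y, X x /\ Y y /\ z = x + y.

Lemma sumset_grp X Y : subgrp X -> subgrp Y -> subgrp (sumset X Y).
Proof.
move=> [X0 [XD XN]] [Y0 [YD YN]]; split; first by exists 0, 0; rewrite addr0.
split.
  move=> _ _ [x1 [y1 [H1 [H2 ->]]]] [x2 [y2 [H3 [H4 ->]]]].
  by exists (x1 + x2), (y1 + y2); rewrite addrACA; auto.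
move=> _ [x [y [H1 [H2 ->]]]]; exists (- x), (- y); rewrite opprD; auto.
Qed.

Hypothesis Ladd : forall a x y, star a (x + y) = star a x + star a y.
Hypothesis Lid : forall p a x, rpow star p x -> rpow star p (star a x).

Variable m : nat.
Hypothesis Hm : (1 <= m)%N.
Hypothesis Hlm : is_zero_set (lpow star m).

Lemma stepD n : (1 <= n)%N ->
  (forall l x, (m ^ n <= l)%N -> bpow star l x -> rpow star n x) ->
  forall r l x, (m ^ n * r + 1 <= l)%N -> bpow star l x ->
     sumset (rpow star n.+1) (lpow star r.+1) x.
Proof.
move=> Hn C; elim => [|r IH] l x Hl Hx.
  by exists 0, x; rewrite add0r; split; [case: (rpow_grp n.+1)|].
have Hmn : (1 <= m ^ n)%N by rewrite expn_gt0 Hm.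
have Hl2 : (2 <= l)%N by nia.
move: (bpow_gen Hl2 Hx); apply: addgen_sub.
  apply: sumset_grp; [exact: rpow_grp|exact: lpow_grp].
move=> z [j [/andP [Hj1 Hj2] Hz]]; move: Hz; apply: addgen_sub.
  apply: sumset_grp; [exact: rpow_grp|exact: lpow_grp].
move=> _ [u [v [Hu [Hv ->]]]].
case: (leqP (m ^ n) j) => Hj.
  exists (star u v), 0; rewrite addr0; split; first by apply: star_rpow => //; exact: C Hu.
  by split => //; case: (lpow_grp r.+2).
have [a [b [Ha [Hb ->]]]] : sumset (rpow star n.+1) (lpow star r.+1) v.
  refine (IH (l - j)%N v _ Hv); nia.
exists (star u a), (star u b); split; first exact: Lid.
split; [exact: star_lpow|exact: Ladd].
Qed.

Lemma mainC n : forall l x, (m ^ n <= l)%N -> bpow star l x -> rpow star n x.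
Proof.
elim: n => [|n IH] l x Hl Hx; first by [].
case: n IH Hl => [|n] IH Hl; first by [].
have Hl' : (m ^ n.+1 * m.-1 + 1 <= l)%N.
  have Hmn : (1 <= m ^ n.+1)%N by rewrite expn_gt0 Hm.
  rewrite expnS in Hl Hmn; move: Hl Hmn; move: Hm; clear; case: m => // m' _ Hl Hmn; nia.
have [a [b [Ha [Hb ->]]]] := stepD (r := m.-1) (isT : (1 <= n.+1)%N) IH Hl' Hx.
have Hm1 : m.-1.+1 = m by rewrite prednK.
rewrite Hm1 in Hb; by rewrite (Hlm Hb) addr0.
Qed.

Lemma mainT n : is_zero_set (rpow star n) -> is_zero_set (bpow star (m ^ n)).
Proof. move=> H x Hx; apply: H; exact: (mainC (l := m ^ n)). Qed.

End G.

Section PL.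
Variables (V : zmodType) (dot : V -> V -> V).
Hypothesis H : is_prelie_ring dot.

Lemma pl_addl x y z : dot (x + y) z = dot x z + dot y z. Proof. by case: H. Qed.
Lemma pl_addr x y z : dot x (y + z) = dot x y + dot x z. Proof. by case: H => _ []. Qed.
Lemma pl_id x y z : dot (dot x y) z - dot x (dot y z) = dot (dot y x) z - dot y (dot x z).
Proof. by case: H => _ []. Qed.
Lemma pl_0r x : dot x 0 = 0.
Proof. have E : dot x 0 + dot x 0 = dot x 0 + 0 by rewrite -pl_addr !addr0. exact: addrI E. Qed.
Lemma pl_Nr x y : dot x (- y) = - dot x y.
Proof. by apply/eqP; rewrite -addr_eq0 -pl_addr addNr pl_0r. Qed.

Lemma pl_Lid p a x : rpow dot p x -> rpow dot p (dot a x).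
Proof.
elim: p a x => [|p IH] a x //; case: p IH => [|p] IH //.
move=> Hx; move: Hx; rewrite {1}rpow_S //; move: x; apply: addgen_sub.
  have [G0 [GD GN]] := rpow_grp dot p.+2.
  split; first by rewrite pl_0r.
  split; first by move=> x y Hx Hy; rewrite pl_addr; apply: GD.
  by move=> x Hx; rewrite pl_Nr; apply: GN.
move=> _ [y [z [Hy [_ ->]]]].
have E : dot a (dot y z) = dot (dot a y) z - dot (dot y a) z + dot y (dot a z).
  rewrite -{1}(subKr (dot (dot a y) z) (dot a (dot y z))) pl_id opprB.
  by rewrite addrA addrAC.
have [G0 [GD GN]] := rpow_grp dot p.+2.
rewrite E; apply GD; [apply GD|].
- apply: star_rpow => //; exact: IH.
- apply: GN; apply: star_rpow => //; apply: rpow_mono; exact: star_rpow.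
- exact: star_rpow.
Qed.
End PL.

Section BR.
Variables (V : zmodType) (o : V -> V -> V).
Hypothesis H : is_left_brace o.

Lemma br_assoc a b c : o a (o b c) = o (o a b) c. Proof. by case: H. Qed.
Lemma br_dist a b c : o a (b + c) + a = o a b + o a c. Proof. by case: H => _ []. Qed.

Lemma br_e : exists e : V, (forall a, o e a = a /\ o a e = a) /\
                 (forall a, exists b, o a b = e /\ o b a = e).
Proof. by case: H => _ []. Qed.

Lemma br_e0 : exists e : V, e = 0 /\ (forall a, o e a = a /\ o a e = a) /\
                 (forall a, exists b, o a b = e /\ o b a = e).
Proof.
have [e [He Hi]] := br_e; exists e; split => //.
have := br_dist e 0 0; rewrite !(proj1 (He _)) !addr0.
by move/eqP; rewrite -{2}(addr0 0) eq_sym -subr_eq0 addrKA sub0r oppr_eq0 => /eqP.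
Qed.

Lemma br_o0 a : o a 0 = a.
Proof. by have [e [-> [He _]]] := br_e0; case: (He a). Qed.
Lemma br_0o a : o 0 a = a.
Proof. by have [e [-> [He _]]] := br_e0; case: (He a). Qed.
Lemma br_inv a : exists b, o a b = 0 /\ o b a = 0.
Proof. by have [e [-> [_ Hi]]] := br_e0. Qed.

Definition lam a x := o a x - a.

Lemma lamD a x y : lam a (x + y) = lam a x + lam a y.
Proof.
rewrite /lam; have E : o a (x + y) = o a x + o a y - a by rewrite -br_dist addrK.
by rewrite E addrACA addrA.
Qed.
Lemma lam0 a : lam a 0 = 0.
Proof. have E : lam a 0 + lam a 0 = lam a 0 + 0 by rewrite -lamD !addr0. exact: addrI E. Qed.
Lemma lamN a x : lam a (- x) = - lam a x.
Proof. by apply/eqP; rewrite -addr_eq0 -lamD addNr lam0. Qed.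
Lemma lamB a x y : lam a (x - y) = lam a x - lam a y.
Proof. by rewrite lamD lamN. Qed.
Lemma lam_comp a b x : lam a (lam b x) = lam (o a b) x.
Proof. by rewrite [lam b x]/lam lamB /lam br_assoc opprB addrA subrK. Qed.

Lemma starE x y : brace_star o x y = lam x y - y.
Proof. by rewrite /brace_star /lam addrAC. Qed.

Lemma br_key a b y z : o a b = 0 -> o b a = 0 ->
  lam a (brace_star o y z) =
  brace_star o (lam a y + lam a (brace_star o y b)) (lam a z).
Proof.
move=> Hab Hba.
set c := lam a y + lam a (brace_star o y b).
have Ec : c = o (o a y) b.
  rewrite /c starE lamB lam_comp.
  have E2 : lam a b = - a by rewrite /lam Hab sub0r.
  rewrite E2 opprK /lam.
  by rewrite addrCA !subrK.
have Eca : o c a = o a y by rewrite Ec -!br_assoc Hba br_o0.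
by rewrite !starE lamB lam_comp lam_comp -Eca.
Qed.

Lemma br_lam_id p a x : rpow (brace_star o) p x -> rpow (brace_star o) p (lam a x).
Proof.
elim: p a x => [|p IH] a x //; case: p IH => [|p] IH //.
move=> Hx; move: Hx; rewrite {1}rpow_S //; move: x; apply: addgen_sub.
  have [G0 [GD GN]] := rpow_grp (brace_star o) p.+2.
  split; first by rewrite lam0.
  split; first by move=> x y Hx Hy; rewrite lamD; apply GD.
  by move=> x Hx; rewrite lamN; apply GN.
move=> _ [y [z [Hy [_ ->]]]].
have [b [Hab Hba]] := br_inv a.
rewrite (br_key _ _ Hab Hba).
have [G0 [GD GN]] := rpow_grp (brace_star o) p.+1.
apply: star_rpow => //; apply GD; first exact: IH.
apply: IH; apply: rpow_mono; exact: star_rpow.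
Qed.

Lemma br_Lid p a x : rpow (brace_star o) p x -> rpow (brace_star o) p (brace_star o a x).
Proof.
move=> Hx; rewrite starE.
have [G0 [GD GN]] := rpow_grp (brace_star o) p.
apply GD; [exact: br_lam_id|exact: GN].
Qed.

Lemma br_Ladd a x y : brace_star o a (x + y) = brace_star o a x + brace_star o a y.
Proof. by rewrite !starE lamD opprD addrACA. Qed.

End BR.

Theorem theorem18 :
  exists s : nat -> nat -> nat,
    (forall n m : nat, (0 < n)%N -> (0 < m)%N ->
       (forall (V : zmodType) (circ : V -> V -> V),
          is_left_brace circ -> nilp_implies (brace_star circ) n m (s n m)) /\
       (forall (V : zmodType) (dot : V -> V -> V),
          is_prelie_ring dot -> nilp_implies dot n m (s n m))) /\
    (forall n m : nat, (0 < n)%N -> (0 < m)%N ->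
       (s n.+1 m <= s n m * m.+1)%N).
Proof.
exists (fun n m => m ^ n)%N; split.
  move=> n m _ Hm; split.
    move=> V circ Hb Hr Hl.
    exact: (mainT (br_Ladd Hb) (br_Lid Hb) Hm Hl Hr).
  move=> V dot Hp Hr Hl.
  exact: (mainT (pl_addr Hp) (pl_Lid Hp) Hm Hl Hr).
move=> n m _ _; rewrite expnS; nia.
Qed.
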